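(* Let $\mathscr G=(\mathscr V,\mathscr E)$ be a finite connected graph with $N$ vertices and $M\ge0$ an integer. The immediate exchange model $(Y_t)$ on $\mathscr C_{N,M}$ has a unique stationary distribution $\pi_Y$, and $$\lim_{t\to\infty}P_\eta(Y_t=\xi)=\pi_Y(\xi)\quad\text{for all }\xi,\eta\in\mathscr C_{N,M},$$ where $P_\eta$ denotes the law of the process started from $Y_0=\eta$.
   Context: $\mathscr C_{N,M}$ is the set of maps $\xi:\mathscr V\to\mathbb N$ with $\sum_x\xi(x)=M$. The immediate exchange model is the discrete-time Markov chain on $\mathscr C_{N,M}$: at each step an edge $(x,y)\in\mathscr E$ is chosen uniformly at random, independent $U_1$ uniform on $\{0,\dots,Y_t(x)\}$ and $U_2$ uniform on $\{0,\dots,Y_t(y)\}$ are drawn, and $Y_{t+1}(x)=Y_t(x)-U_1+U_2$, $Y_{t+1}(y)=Y_t(y)-U_2+U_1$, $Y_{t+1}(z)=Y_t(z)$ for $z\notin\{x,y\}$. *)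

(* Defs.v *)
From HB Require Import structures.
From mathcomp Require Import all_boot all_order all_algebra.
From mathcomp Require Import all_classical all_reals all_analysis.
Set Implicit Arguments. Unset Strict Implicit. Unset Printing Implicit Defensive.
Import Order.TTheory GRing.Theory Num.Theory.
Local Open Scope ring_scope.

(* C_{N,M}: maps xi : V -> nat with \sum_x xi x = M.  Every value is <= M,
   so we store them in 'I_M.+1 to obtain a finite type. *)
Definition conf (V : finType) (M : nat) : finType :=
  {f : {ffun V -> 'I_M.+1} | (\sum_(x : V) (f x : nat))%N == M}.

Definition cval (V : finType) (M : nat) (xi : conf V M) (x : V) : nat :=
  (val xi) x.

Definition edges (V : finType) (e : rel V) : {set V * V} :=
  [set p : V * V | e p.1 p.2].

Definition ie_step (V : finType) (M : nat) (eta xi : conf V M) (x y : V)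
    (u1 u2 : nat) : bool :=
  [forall z : V, cval xi z ==
     (if z == x then (cval eta x - u1 + u2)%N
      else if z == y then (cval eta y - u2 + u1)%N
      else cval eta z)].

(* one-step transition kernel: edge uniform in edges e, U1 uniform on
   {0..eta x}, U2 uniform on {0..eta y}, independent *)
Definition ie_kernel (R : realType) (V : finType) (e : rel V) (M : nat)
    (eta xi : conf V M) : R :=
  \sum_(p in edges e)
    \sum_(u1 < (cval eta p.1).+1) \sum_(u2 < (cval eta p.2).+1)
      (#|edges e|%:R^-1 * ((cval eta p.1).+1%:R)^-1 * ((cval eta p.2).+1%:R)^-1
        * (ie_step eta xi p.1 p.2 u1 u2)%:R).

Fixpoint ie_law (R : realType) (V : finType) (e : rel V) (M : nat)
    (t : nat) (eta xi : conf V M) : R :=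
  match t with
  | 0%N => (eta == xi)%:R
  | t'.+1 => \sum_(zeta : conf V M) @ie_law R V e M t' eta zeta * ie_kernel R e zeta xi
  end.

Definition ie_stationary (R : realType) (V : finType) (e : rel V) (M : nat)
    (pi : conf V M -> R) : Prop :=
  (forall xi, 0 <= pi xi) /\ \sum_(xi : conf V M) pi xi = 1 /\
  (forall xi, \sum_(eta : conf V M) pi eta * ie_kernel R e eta xi = pi xi).

(* Main.v *)
Require Import Defs.
From HB Require Import structures.
From mathcomp Require Import all_boot all_order all_algebra.
From mathcomp Require Import all_classical all_reals all_analysis.
From mathcomp Require Import ring lra zify.
Import Order.TTheory GRing.Theory Num.Theory.
Import numFieldNormedType.Exports.
Local Open Scope classical_set_scope.
Local Open Scope ring_scope.

Set Implicit Arguments. Unset Strict Implicit.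


Section Gen.
Variables (R : realType) (S : finType) (K : S -> S -> R).
Hypothesis K0 : forall a b, 0 <= K a b.
Hypothesis K1 : forall a, \sum_b K a b = 1.

Fixpoint law (t : nat) (a b : S) : R :=
  match t with
  | 0%N => (a == b)%:R
  | t'.+1 => \sum_z law t' a z * K z b
  end.

Lemma law_ge0 t a b : 0 <= law t a b.
Proof.
elim: t b => [|t IH] b /=; first by case: (a == b).
by apply: sumr_ge0 => z _; apply: mulr_ge0.
Qed.

Lemma sum_delta (a : S) (f : S -> R) : \sum_b f b * (b == a)%:R = f a.
Proof.
rewrite (bigD1 a) //= eqxx mulr1 big1 ?addr0 // => b /negbTE ->.
by rewrite mulr0.
Qed.

Lemma sum_delta' (a : S) (f : S -> R) : \sum_b (a == b)%:R * f b = f a.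
Proof.
rewrite (bigD1 a) //= eqxx mul1r big1 ?addr0 // => b; rewrite eq_sym => /negbTE ->.
by rewrite mul0r.
Qed.

Lemma law_sum1 t a : \sum_b law t a b = 1.
Proof.
elim: t => [|t IH] /=.
  by rewrite (bigD1 a) //= eqxx big1 ?addr0 // => b; rewrite eq_sym => /negbTE ->.
rewrite exchange_big /= -IH; apply: eq_bigr => z _.
by rewrite -mulr_sumr K1 mulr1.
Qed.

Lemma law_le1 t a b : law t a b <= 1.
Proof.
rewrite -(law_sum1 t a) (bigD1 b) //= lerDl.
by apply: sumr_ge0 => z _; apply: law_ge0.
Qed.

Lemma law_CK k l a c : law (k + l) a c = \sum_b law k a b * law l b c.
Proof.
elim: l c => [|l IH] c /=.
  by rewrite addn0 sum_delta.
rewrite addnS /=.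
under eq_bigr do rewrite IH mulr_suml.
rewrite exchange_big /=; apply: eq_bigr => b _.
by rewrite mulr_sumr; apply: eq_bigr => z _; rewrite mulrA.
Qed.

Lemma law1 a b : law 1 a b = K a b.
Proof. by rewrite /= sum_delta'. Qed.

Lemma convc (p f : S -> R) v c : (forall z, 0 <= p z) -> \sum_z p z = 1 ->
  (forall z, `|v - f z| <= c) -> `|v - \sum_z p z * f z| <= c.
Proof.
move=> p0 p1 hf.
have -> : v - \sum_z p z * f z = \sum_z p z * (v - f z).
  rewrite -[v in LHS]mul1r -p1 mulr_suml -sumrB.
  by apply: eq_bigr => z _; rewrite mulrBr.
apply: le_trans (ler_norm_sum _ _ _) _.
apply: le_trans (_ : \sum_z p z * c <= c).
  apply: ler_sum => z _; rewrite normrM ger0_norm //.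
  by apply: ler_wpM2l.
by rewrite -mulr_suml p1 mul1r.
Qed.


Lemma sum_pt (z0 : S) (d : R) : \sum_z (z == z0)%:R * d = d.
Proof.
rewrite (bigD1 z0) //= eqxx mul1r big1 ?addr0 // => b /negbTE ->.
by rewrite mul0r.
Qed.

Lemma contr (p q f : S -> R) z0 d c :
  (forall z, 0 <= p z) -> (forall z, 0 <= q z) ->
  \sum_z p z = 1 -> \sum_z q z = 1 -> 0 <= d -> d <= 2^-1 ->
  d <= p z0 -> d <= q z0 -> (forall z w, `|f z - f w| <= c) ->
  `|\sum_z p z * f z - \sum_z q z * f z| <= (1 - d) * c.
Proof.
move=> p0 q0 p1 q1 d0 d2 dp dq hf.
pose a z := p z - (z == z0)%:R * d.
pose b z := q z - (z == z0)%:R * d.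
have a0 z : 0 <= a z.
  rewrite /a; case: eqP => [->|_]; rewrite ?mul1r ?mul0r ?subr0 ?subr_ge0 //.
have b0 z : 0 <= b z.
  rewrite /b; case: eqP => [->|_]; rewrite ?mul1r ?mul0r ?subr0 ?subr_ge0 //.
have sa : \sum_z a z = 1 - d by rewrite /a sumrB p1 sum_pt.
have sb : \sum_z b z = 1 - d by rewrite /b sumrB q1 sum_pt.
have ea : \sum_z p z * f z = \sum_z a z * f z + d * f z0.
  rewrite /a; under [X in _ = X + _]eq_bigr do rewrite mulrBl.
  rewrite sumrB.
  have -> : \sum_z (z == z0)%:R * d * f z = d * f z0.
    rewrite (bigD1 z0) //= eqxx mul1r big1 ?addr0 // => w /negbTE ->.
    by rewrite !mul0r.
  by rewrite subrK.
have eb : \sum_z q z * f z = \sum_z b z * f z + d * f z0.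
  rewrite /b; under [X in _ = X + _]eq_bigr do rewrite mulrBl.
  rewrite sumrB.
  have -> : \sum_z (z == z0)%:R * d * f z = d * f z0.
    rewrite (bigD1 z0) //= eqxx mul1r big1 ?addr0 // => w /negbTE ->.
    by rewrite !mul0r.
  by rewrite subrK.
have eD : \sum_z p z * f z - \sum_z q z * f z = \sum_z a z * f z - \sum_z b z * f z.
  by rewrite ea eb; ring.
have key : (1 - d) * (\sum_z a z * f z - \sum_z b z * f z) =
    \sum_z \sum_w a z * b w * (f z - f w).
  transitivity (\sum_z \sum_w (a z * f z * b w) - \sum_z \sum_w (a z * (b w * f w))).
    2: by rewrite -sumrB; apply: eq_bigr => z _; rewrite -sumrB;
       apply: eq_bigr => w _; ring.
  have h1 : \sum_z \sum_w a z * f z * b w = (\sum_z a z * f z) * (1 - d).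
    by rewrite mulr_suml; apply: eq_bigr => z _; rewrite -mulr_sumr sb.
  have h2 : \sum_z \sum_w a z * (b w * f w) = (1 - d) * \sum_w b w * f w.
    by rewrite -sa mulr_suml; apply: eq_bigr => z _; rewrite -mulr_sumr.
  rewrite h1 h2; ring.
have s0 : 0 < 1 - d by rewrite subr_gt0; apply: le_lt_trans d2 _; rewrite invf_lt1 ?ltr1n.
rewrite eD -(ler_pM2l s0).
rewrite -{1}(gtr0_norm s0) -normrM key.
apply: le_trans (ler_norm_sum _ _ _) _.
apply: le_trans (_ : \sum_z \sum_w a z * b w * c <= _).
  apply: ler_sum => z _; apply: le_trans (ler_norm_sum _ _ _) _.
  apply: ler_sum => w _; rewrite normrM ger0_norm ?mulr_ge0 //.
  by apply: ler_wpM2l; rewrite ?mulr_ge0.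
under eq_bigr do rewrite -mulr_suml -mulr_sumr sb.
by rewrite -!mulr_suml sa -mulrA.
Qed.

End Gen.


Lemma cvg_sumseq (R : realType) (I : Type) (r : seq I) (f : I -> nat -> R) (l : I -> R) :
  (forall i, f i @ \oo --> l i) ->
  (fun t => \sum_(i <- r) f i t) @ \oo --> \sum_(i <- r) l i.
Proof.
move=> hf; elim: r => [|i r IH].
  rewrite big_nil; under eq_fun do rewrite big_nil; exact: cvg_cst.
rewrite big_cons; under eq_fun do rewrite big_cons.
exact: cvgD.
Qed.

Lemma pow_small (R : realType) (rho eps : R) : 0 <= rho -> rho < 1 -> 0 < eps ->
  exists k, rho ^+ k < eps.
Proof.
move=> r0 r1 e0.
have := @cvg_expr R rho; rewrite ger0_norm // => /(_ r1) /cvgrPdist_lt /(_ eps e0).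
move=> [N _ hN]; exists N; have := hN N (leqnn N).
by rewrite sub0r normrN ger0_norm // exprn_ge0.
Qed.

Section Main.
Variables (R : realType) (S : finType) (K : S -> S -> R).
Hypothesis K0 : forall a b, 0 <= K a b.
Hypothesis K1 : forall a, \sum_b K a b = 1.
Variables (z0 : S) (T : nat).
Hypothesis hT : forall a, 0 < law K T a z0.

Let L := law K.

Definition dlt := \big[Num.min/2^-1]_a law K T a z0.

Lemma dlt_gt0 : 0 < dlt.
Proof.
rewrite /dlt; apply: (big_ind (fun x => 0 < x)) => //.
by move=> x y hx hy; rewrite lt_min hx hy.
Qed.

Lemma dlt_le2 : dlt <= 2^-1.
Proof.
rewrite /dlt; apply: (big_rec (fun x => x <= 2^-1)) => // i y _ hy.
by rewrite ge_min hy orbT.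
Qed.

Lemma dlt_le a : dlt <= law K T a z0.
Proof. by rewrite /dlt (bigD1 a) //= ge_min lexx. Qed.

Let rho := 1 - dlt.

Lemma rho_ge0 : 0 <= rho.
Proof. have := dlt_le2; have : (2^-1 : R) <= 1 by rewrite invf_le1 ?ler1n. rewrite /rho; lra. Qed.

Lemma rho_lt1 : rho < 1.
Proof. have := dlt_gt0; rewrite /rho; lra. Qed.

Lemma osc k a b xi : `|law K (k * T) a xi - law K (k * T) b xi| <= rho ^+ k.
Proof.
elim: k a b => [|k IH] a b.
  rewrite mul0n expr0 ler_norml.
  have := law_ge0 K0 0 a xi; have := law_ge0 K0 0 b xi.
  have := law_le1 K0 K1 0 a xi; have := law_le1 K0 K1 0 b xi.
  move=> h1 h2 h3 h4; apply/andP; split; lra.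
rewrite mulSn !law_CK exprS.
apply: contr => //.
- by move=> z; apply: law_ge0.
- by move=> z; apply: law_ge0.
- exact: law_sum1.
- exact: law_sum1.
- exact: ltW dlt_gt0.
- exact: dlt_le2.
- exact: dlt_le.
- exact: dlt_le.
Qed.

Lemma far k t a xi v c : (k * T <= t)%N ->
  (forall z, `|v - law K (k * T) z xi| <= c) -> `|v - law K t a xi| <= c.
Proof.
move=> hkt hv; rewrite -(subnK hkt) law_CK.
apply: (@convc R S (law K (t - k * T) a) (fun z => law K (k * T) z xi)) => //.
- by move=> z; apply: law_ge0.
- exact: law_sum1.
Qed.


Lemma u_cvg xi : cvg ((fun t => law K t z0 xi) @ \oo).
Proof.
apply/cauchy_cvgP; apply: cauchy_exP => eps e0.
have [k hk] := pow_small rho_ge0 rho_lt1 e0.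
exists (law K (k * T) z0 xi); exists (k * T)%N => // t /= hkt.
rewrite -ball_normE /=.
apply: (le_lt_trans _ hk).
exact: (far z0 hkt (fun z => osc k z0 z xi)).
Qed.

Definition piM xi := lim ((fun t => law K t z0 xi) @ \oo).

Lemma u_to xi : (fun t => law K t z0 xi) @ \oo --> piM xi.
Proof. exact: u_cvg. Qed.

Lemma pi_near k b xi : `|piM xi - law K (k * T) b xi| <= rho ^+ k.
Proof.
rewrite ler_distl; apply/andP; split.
  apply: (cvgr_to_ge (@u_to xi)).
  exists (k * T)%N => // t /= hkt.
  have := far z0 hkt (fun z => osc k b z xi).
  rewrite ler_distl => /andP [h1 h2]; lra.
apply: (cvgr_to_le (@u_to xi)).
exists (k * T)%N => // t /= hkt.
have := far z0 hkt (fun z => osc k b z xi).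
rewrite ler_distl => /andP [h1 h2]; lra.
Qed.

Lemma law_to eta xi : (fun t => law K t eta xi) @ \oo --> piM xi.
Proof.
apply/cvgrPdist_le => eps e0.
have [k hk] := pow_small rho_ge0 rho_lt1 e0.
exists (k * T)%N => // t /= hkt.
apply: le_trans (ltW hk).
exact: (far eta hkt (fun z => pi_near k z xi)).
Qed.


Definition statK (pi : S -> R) := (forall xi, 0 <= pi xi) /\ \sum_xi pi xi = 1 /\
  (forall xi, \sum_eta pi eta * K eta xi = pi xi).

Lemma cst_to (f : nat -> R) (a l : R) : (forall t, f t = a) -> f @ \oo --> l -> l = a.
Proof.
move=> hf h.
have e : f = fun _ => a by apply: funext.
apply/eqP; rewrite eq_le; apply/andP; split.
  by apply: (cvgr_to_le h); exists 0%N => // t _; rewrite hf.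
by apply: (cvgr_to_ge h); exists 0%N => // t _; rewrite hf.
Qed.

Lemma cvg_uniq (f : nat -> R) (a l : R) : f @ \oo --> a -> f @ \oo --> l -> l = a.
Proof.
move=> ha hl; exact: (cvg_unique (@Rhausdorff R) hl ha).
Qed.

Lemma piM_stat : statK piM.
Proof.
split; [|split].
- move=> xi; apply: (cvgr_to_ge (@u_to xi)).
  by exists 0%N => // t _; apply: law_ge0.
- have h := @cvg_sumseq R S (index_enum S) (fun xi t => law K t z0 xi) piM (fun xi => @u_to xi).
  exact: (cst_to (fun t => law_sum1 K1 t z0) h).
- move=> xi.
  have h1 := @cvg_sumseq R S (index_enum S) (fun eta t => law K t z0 eta * K eta xi)
     (fun eta => piM eta * K eta xi) (fun eta => cvgMr_tmp (@u_to eta)).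
  have h2 := @u_to xi; rewrite -cvg_shiftS in h2.
  symmetry; exact: (cvg_uniq (h1 _) h2).
Qed.

Lemma stat_law (pi : S -> R) : statK pi -> forall t xi, \sum_eta pi eta * law K t eta xi = pi xi.
Proof.
move=> [_ [_ hs]] t; elim: t => [|t IH] xi /=.
  by rewrite (bigD1 xi) //= eqxx mulr1 big1 ?addr0 // => b /negbTE ->; rewrite mulr0.
rewrite -hs; under eq_bigr do rewrite mulr_sumr.
rewrite exchange_big /=; apply: eq_bigr => z _.
by rewrite -IH mulr_suml; apply: eq_bigr => eta _; rewrite mulrA.
Qed.

Lemma stat_uniq (pi : S -> R) : statK pi -> pi = piM.
Proof.
move=> hpi; apply: funext => xi.
have h := @cvg_sumseq R S (index_enum S) (fun eta t => pi eta * law K t eta xi)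
     (fun eta => pi eta * piM xi) (fun eta => cvgMl_tmp (@law_to eta xi)).
have := cst_to (fun t => stat_law hpi t xi) (h _).
by rewrite -mulr_suml (proj1 (proj2 hpi)) mul1r => ->.
Qed.

End Main.


Section Conf.
Variables (V : finType) (M : nat).

Lemma csum (eta : conf V M) : (\sum_z cval eta z)%N = M.
Proof. exact: (eqP (valP eta)). Qed.

Lemma cle (eta : conf V M) z : (cval eta z <= M)%N.
Proof. by rewrite -ltnS; apply: ltn_ord. Qed.

Lemma sum2 (f : V -> nat) x y : x != y ->
  (\sum_z f z = f x + f y + \sum_(z | (z != x) && (z != y)) f z)%N.
Proof.
move=> xy; rewrite (bigD1 x) //= (bigD1 y) /=; last by rewrite eq_sym.
rewrite addnA; congr (_ + _)%N; apply: eq_bigl => z; by rewrite andbC.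
Qed.

Lemma mk_conf (g : V -> nat) : (\sum_z g z)%N = M ->
  {xi : conf V M | forall z, cval xi z = g z}.
Proof.
move=> hs.
have gb z : (g z < M.+1)%N.
  rewrite ltnS -hs (bigD1 z) //=; exact: leq_addr.
have hs' : (\sum_(x : V) (([ffun z => inord (g z)] : {ffun V -> 'I_M.+1}) x : nat))%N == M.
  apply/eqP; rewrite -[in RHS]hs; apply: eq_bigr => z _; rewrite ffunE inordK //.
exists (exist _ [ffun z => inord (g z)] hs') => z.
by rewrite /cval /= ffunE inordK.
Qed.

Lemma cval_inj (a b : conf V M) : (forall z, cval a z = cval b z) -> a = b.
Proof.
move=> h; apply: val_inj; apply/ffunP => z; apply: val_inj; exact: h.
Qed.

Lemma ie_stepP (eta xi : conf V M) x y u1 u2 : ie_step eta xi x y u1 u2 ->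
  forall z, cval xi z = (if z == x then (cval eta x - u1 + u2)%N
      else if z == y then (cval eta y - u2 + u1)%N else cval eta z).
Proof. by move=> /forallP h z; apply/eqP; exact: h. Qed.

Lemma step_ex (eta : conf V M) x y u1 u2 : x != y ->
  (u1 <= cval eta x)%N -> (u2 <= cval eta y)%N ->
  exists xi, ie_step eta xi x y u1 u2.
Proof.
move=> xy h1 h2.
pose g z := if z == x then (cval eta x - u1 + u2)%N
      else if z == y then (cval eta y - u2 + u1)%N else cval eta z.
have hs : (\sum_z g z)%N = M.
  rewrite -(csum eta) (sum2 g xy) (sum2 (cval eta) xy).
  have -> : g x = (cval eta x - u1 + u2)%N by rewrite /g eqxx.
  have -> : g y = (cval eta y - u2 + u1)%N by rewrite /g eq_sym (negbTE xy) eqxx.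
  have -> : (\sum_(z | (z != x) && (z != y)) g z = \sum_(z | (z != x) && (z != y)) cval eta z)%N.
    by apply: eq_bigr => z /andP [/negbTE hx /negbTE hy]; rewrite /g hx hy.
  lia.
have [xi hxi] := mk_conf hs.
by exists xi; apply/forallP => z; rewrite hxi.
Qed.

Lemma step_uniq (eta xi xi' : conf V M) x y u1 u2 :
  ie_step eta xi x y u1 u2 -> ie_step eta xi' x y u1 u2 -> xi = xi'.
Proof.
move=> /ie_stepP h /ie_stepP h'; apply: cval_inj => z; by rewrite h h'.
Qed.

End Conf.

Lemma pos_sum (R : realType) (I : finType) (P : pred I) (F : I -> R) i :
  P i -> (forall j, P j -> 0 <= F j) -> 0 < F i -> 0 < \sum_(j | P j) F j.
Proof.
move=> Pi h0 hi; rewrite (bigD1 i) //=.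
have : 0 <= \sum_(j | P j && (j != i)) F j by apply: sumr_ge0 => j /andP [Pj _]; exact: h0.
lra.
Qed.

Lemma avg (R : realType) n (A : R) : \sum_(u < n.+1) A * (n.+1%:R)^-1 = A.
Proof.
rewrite sumr_const cardT size_enum_ord -[_ / _ *+ _]mulr_natr -mulrA mulVf ?mulr1 //.
Qed.

Section Ker.
Variables (R : realType) (V : finType) (e : rel V) (M : nat).
Hypothesis e_irr : irreflexive e.

Lemma edge_neq (p : V * V) : p \in edges e -> p.1 != p.2.
Proof.
rewrite inE; apply: contraTN => /eqP ->; by rewrite e_irr.
Qed.

Lemma ker_ge0 (eta xi : conf V M) : 0 <= ie_kernel R e eta xi.
Proof.
apply: sumr_ge0 => p _; apply: sumr_ge0 => u1 _; apply: sumr_ge0 => u2 _.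
by rewrite !mulr_ge0 ?invr_ge0 ?ler0n.
Qed.

Lemma step_count (eta : conf V M) (p : V * V) u1 u2 : p \in edges e ->
  (u1 <= cval eta p.1)%N -> (u2 <= cval eta p.2)%N ->
  \sum_(xi : conf V M) ((ie_step eta xi p.1 p.2 u1 u2)%:R : R) = 1.
Proof.
move=> hp h1 h2.
have [xi hxi] := step_ex (edge_neq hp) h1 h2.
rewrite (bigD1 xi) //= hxi big1 ?addr0 // => xi' hne.
case hs: (ie_step eta xi' p.1 p.2 u1 u2) => //.
by rewrite (step_uniq hxi hs) eqxx in hne.
Qed.

Lemma ker_sum1 (hE : (0 < #|edges e|)%N) (eta : conf V M) :
  \sum_xi ie_kernel R e eta xi = 1.
Proof.
rewrite /ie_kernel exchange_big /=.
transitivity (\sum_(p in edges e) (#|edges e|%:R : R)^-1).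
  apply: eq_bigr => p hp; rewrite exchange_big /=.
  rewrite -[RHS](avg (cval eta p.1)); apply: eq_bigr => u1 _.
  rewrite exchange_big /=.
  rewrite -[RHS](avg (cval eta p.2)); apply: eq_bigr => u2 _.
  rewrite -mulr_sumr step_count ?mulr1 //.
    by rewrite -ltnS.
  by rewrite -ltnS.
rewrite sumr_const -[_ *+ _]mulr_natr mulVf //.
by rewrite pnatr_eq0 -lt0n.
Qed.

Lemma ker_pos (eta xi : conf V M) (p : V * V) u1 u2 : p \in edges e ->
  (u1 <= cval eta p.1)%N -> (u2 <= cval eta p.2)%N ->
  ie_step eta xi p.1 p.2 u1 u2 -> 0 < ie_kernel R e eta xi.
Proof.
move=> hp h1 h2 hs.
have hE : (0 < #|edges e|)%N by apply/card_gt0P; exists p.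
rewrite /ie_kernel; apply: (pos_sum hp).
  move=> q _; apply: sumr_ge0 => v1 _; apply: sumr_ge0 => v2 _.
  by rewrite !mulr_ge0 ?invr_ge0 ?ler0n.
have h1' : (u1 < (cval eta p.1).+1)%N by [].
have h2' : (u2 < (cval eta p.2).+1)%N by [].
apply: (@pos_sum R _ xpredT _ (Ordinal h1')).
- by [].
- by move=> v1 _; apply: sumr_ge0 => v2 _; rewrite !mulr_ge0 ?invr_ge0 ?ler0n.
apply: (@pos_sum R _ xpredT _ (Ordinal h2')).
- by [].
- by move=> v2 _; rewrite !mulr_ge0 ?invr_ge0 ?ler0n.
rewrite /= hs mulr1 !mulr_gt0 // invr_gt0 ltr0n //.
Qed.

End Ker.


Section Reach.
Variables (R : realType) (V : finType) (e : rel V) (M : nat).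
Hypothesis e_irr : irreflexive e.
Hypothesis e_conn : forall x y : V, connect e x y.
Hypothesis hN : (1 < #|V|)%N.

Let K := @ie_kernel R V e M.
Let L := law K.

Lemma hE : (0 < #|edges e|)%N.
Proof.
have [x [y [_ _ xy]]] := card_gt1P hN.
have /connectP [p hp hl] := e_conn x y.
case: p hp hl => [|z p] /=; first by move=> _ hy; rewrite hy eqxx in xy.
move=> /andP [hxz _] _; apply/card_gt0P; exists (x, z); by rewrite inE.
Qed.

Lemma self_pos (eta : conf V M) : 0 < K eta eta.
Proof.
have [p hp] := card_gt0P hE.
rewrite /K. apply: (ker_pos R (p := p) (u1 := 0%N) (u2 := 0%N) hp) => //.
apply/forallP => z; rewrite !subn0 !addn0.
by case: ifP => [/eqP ->|_] //; case: ifP => [/eqP ->|_].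
Qed.

Lemma edge_pos (eta : conf V M) x y : e x y ->
  exists xi, [/\ 0 < K eta xi, cval xi x = 0%N, cval xi y = (cval eta y + cval eta x)%N &
     forall z, z != x -> z != y -> cval xi z = cval eta z].
Proof.
move=> hxy.
have hp : (x, y) \in edges e by rewrite inE.
have xy := edge_neq e_irr hp.
have [xi hs] := step_ex (u1 := cval eta x) (u2 := 0%N) xy (leqnn _) (leq0n _).
exists xi; split.
- exact: (ker_pos R hp (leqnn _) (leq0n _) hs).
- by rewrite (ie_stepP hs) eqxx subnn.
- by rewrite (ie_stepP hs) eq_sym (negbTE xy) eqxx subn0.
- by move=> z /negbTE hx /negbTE hy; rewrite (ie_stepP hs) hx hy.
Qed.

Definition reach (a b : conf V M) := exists k, 0 < L k a b.

Lemma reach_refl a : reach a a.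
Proof. by exists 0%N; rewrite /L /= eqxx ltr01. Qed.

Lemma reach_step a b : 0 < K a b -> reach a b.
Proof. by move=> h; exists 1%N; rewrite /L law1. Qed.

Lemma reach_trans a b c : reach a b -> reach b c -> reach a c.
Proof.
move=> [k hk] [l hl]; exists (k + l)%N; rewrite /L law_CK.
apply: (@pos_sum R _ xpredT _ b) => //.
  by move=> j _; rewrite mulr_ge0 // law_ge0 //; apply: ker_ge0.
exact: mulr_gt0.
Qed.

Lemma L_mono k a b : 0 < L k a b -> forall j, 0 < L (k + j) a b.
Proof.
move=> h; elim=> [|j IH]; first by rewrite addn0.
rewrite addnS /L /=; apply: (@pos_sum R _ xpredT _ b) => //.
  by move=> z _; rewrite mulr_ge0 // ?law_ge0 //; apply: ker_ge0.
by rewrite mulr_gt0 //; apply: self_pos.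
Qed.


Lemma z0_ex v0 : exists z0 : conf V M, cval z0 v0 = M.
Proof.
have hs : (\sum_z (if z == v0 then M else 0%N))%N = M.
  by rewrite (bigD1 v0) //= eqxx big1 ?addn0 // => z /negbTE ->.
have [xi hxi] := mk_conf hs.
by exists xi; rewrite hxi eqxx.
Qed.

Lemma zero_off (a : conf V M) v0 : cval a v0 = M -> forall z, z != v0 -> cval a z = 0%N.
Proof.
move=> h z hz; have := csum a; rewrite (bigD1 v0) //= h => /eqP.
move=> h'; have /eqP : (\sum_(i | i != v0) cval a i = 0)%N by lia.
by rewrite sum_nat_eq0 => /forallP /(_ z) /implyP /(_ hz) /eqP.
Qed.

Lemma full_eq (a b : conf V M) v0 : cval a v0 = M -> cval b v0 = M -> a = b.
Proof.
move=> ha hb; apply: cval_inj => z.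
case: (eqVneq z v0) => [->|hz]; first by rewrite ha hb.
by rewrite (zero_off ha hz) (zero_off hb hz).
Qed.

Lemma move_path v0 p : forall x (eta : conf V M), x != v0 -> path e x p ->
  last x p = v0 -> uniq (x :: p) ->
  exists eta', reach eta eta' /\ (cval eta v0 + cval eta x <= cval eta' v0)%N.
Proof.
elim: p => [|y p IH] x eta hx /=.
  by move=> _ hl; rewrite hl eqxx in hx.
move=> /andP [hxy hp] hl /andP [hxn hu].
have [xi [hk hxi0 hxiy hxio]] := edge_pos eta hxy.
have hv0x : v0 != x by rewrite eq_sym.
case: (eqVneq y v0) => [hy|hy].
  exists xi; split; first exact: reach_step.
  by rewrite -hy hxiy addnC.
have [eta' [hr hle]] := IH y xi hy hp hl hu.
exists eta'; split; first exact: reach_trans (reach_step hk) hr.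
have hv0y : v0 != y by rewrite eq_sym.
have := hxio v0 hv0x hv0y.
move: hle; rewrite hxiy; lia.
Qed.

Lemma reach_full v0 (z0 : conf V M) : cval z0 v0 = M -> forall eta, reach eta z0.
Proof.
move=> hz eta.
move: (leqnn (M - cval eta v0)); move: {2}(M - cval eta v0)%N => n.
elim: n eta => [|n IH] eta hn.
  have hc := cle eta v0; have hM : cval eta v0 = M by lia.
  by rewrite (full_eq hM hz); apply: reach_refl.
case: (eqVneq (cval eta v0) M) => hM.
  by rewrite (full_eq hM hz); apply: reach_refl.
have : ~~ [forall x, (x != v0) ==> (cval eta x == 0%N)].
  apply/negP => /forallP h; move/eqP: hM; apply.
  have := csum eta; rewrite (bigD1 v0) //= big1 ?addn0 //.
  by move=> z hz'; apply/eqP; exact: (implyP (h z) hz').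
move=> /forallPn [x]; rewrite negb_imply => /andP [hx hpos].
have /connectP [p hp hl] := e_conn x v0.
move: hl; case/shortenP: hp => p' hp' hu _ hl.
have [eta' [hr hle]] := @move_path v0 p' x eta hx hp' (esym hl) hu.
apply: (reach_trans hr); apply: IH.
have := cle eta' v0; move: hpos hle hn; lia.
Qed.

Lemma exT v0 (z0 : conf V M) : cval z0 v0 = M -> exists T, forall a, 0 < L T a z0.
Proof.
move=> hz.
pose k a := xchoose (reach_full hz a).
exists (\max_a k a)%N => a.
have hk : (k a <= \max_a k a)%N by apply: leq_bigmax.
rewrite -(subnKC hk); apply: L_mono.
exact: (xchooseP (reach_full hz a)).
Qed.

End Reach.

Unset Implicit Arguments. Set Strict Implicit.

Theorem lemma3 (R : realType) (V : finType) (e : rel V) (M : nat)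
    (e_sym : symmetric e) (e_irr : irreflexive e)
    (e_conn : forall x y : V, connect e x y) (hN : (1 < #|V|)%N) :
  exists pi : conf V M -> R,
    ie_stationary e pi /\
    (forall pi' : conf V M -> R, ie_stationary e pi' -> pi' = pi) /\
    (forall eta xi : conf V M, (fun t => ie_law R e t eta xi) @ \oo --> pi xi).
Proof.
have [v0 [_ [_ _ _]]] := card_gt1P hN.
have [z0 hz0] := z0_ex M v0.
have [T hT] := exT R e_irr e_conn hN hz0.
have K0 := ker_ge0 R e (M:=M).
have K1 := ker_sum1 R (M:=M) e_irr (hE e_conn hN).
have eqlaw : forall t (eta xi : conf V M), ie_law R e t eta xi = law (ie_kernel R e (M:=M)) t eta xi.
  elim=> [|t IH] eta xi //=.
  by apply: eq_bigr => z _; rewrite IH.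
exists (piM (ie_kernel R e (M:=M)) z0); split; [|split].
- exact: (piM_stat K0 K1 hT).
- move=> pi' hpi'; exact: (stat_uniq K0 K1 hT hpi').
- move=> eta xi.
  have -> : (fun t => ie_law R e t eta xi) = (fun t => law (ie_kernel R e (M:=M)) t eta xi).
    by apply: funext => t; rewrite eqlaw.
  exact: (law_to K0 K1 hT eta).
Qed.
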